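(* Let $\tau$ be any substitution. Then (i) no two different basic generators for $\tau$ are G related, and (ii) every generator for $\tau$ is G related to a unique basic generator.
   Context: Let $\mathcal{A}$ be a finite nonempty alphabet, $\mathcal{A}^*$ the finite words over $\mathcal{A}$ (including the empty word), $\mathcal{A}^+$ the nonempty words, $|u|$ the length of $u$. A word $u$ is a factor of $v$ if $v=w_1uw_2$ for some words $w_1,w_2$. A substitution is a map $\tau:\mathcal{A}\to\mathcal{A}^+$ extended to a concatenation-respecting map on words. The language $\mathcal{L}(\tau)$ is the set of words that are factors of $\tau^n(a)$ for some letter $a$ and some $n\ge1$. A generator for $\tau$ is a triple $(v,u,w)$ with $v,u,w\in\mathcal{A}^+$, $u\in\mathcal{L}(\tau)$ and $\tau(u)=vuw$; $v$, $u$, $w$ are its left wing, center and right wing, and its length is $|u|$. If $(v,u,cw)$ is a generator with $c\in\mathcal{A}$, $w\in\mathcal{A}^*$, its right extension is the generator $(v,uc,w\tau(c))$; if $(vc,u,w)$ is a generator with $c\in\mathcal{A}$, $v\in\mathcal{A}^*$, its left extension is the generator $(\tau(c)v,cu,w)$. Two generators $g_1,g_2$ are G related ($g_1\sim_G g_2$) if there is a generator $g_3$ obtainable from $g_1$ and also from $g_2$ by finite (possibly empty) sequences of left and right extensions. A generator is basic if it is not G related to any generator of smaller length. *)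

(* Defs.v *)
From mathcomp Require Import all_boot.
Set Implicit Arguments. Unset Strict Implicit. Unset Printing Implicit Defensive.

Section Subst.
Variable A : finType.

Definition is_substitution (tau : A -> seq A) : Prop := forall a, tau a <> [::].

Definition subst_word (tau : A -> seq A) (w : seq A) : seq A := flatten (map tau w).

Definition factor (u v : seq A) : Prop := exists w1 w2, v = w1 ++ u ++ w2.

Definition in_lang (tau : A -> seq A) (u : seq A) : Prop :=
  exists (a : A) (n : nat), 1 <= n /\ factor u (iter n (subst_word tau) [:: a]).

Definition gen_triple := (seq A * seq A * seq A)%type.

Definition gen_left (g : gen_triple) : seq A := g.1.1.
Definition gen_center (g : gen_triple) : seq A := g.1.2.
Definition gen_right (g : gen_triple) : seq A := g.2.

Definition generator (tau : A -> seq A) (g : gen_triple) : Prop :=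
  let: (v, u, w) := g in
  [/\ v <> [::], u <> [::], w <> [::], in_lang tau u &
      subst_word tau u = v ++ u ++ w].

Definition gen_len (g : gen_triple) : nat := size (gen_center g).

Definition ext_step (tau : A -> seq A) (g g' : gen_triple) : Prop :=
  generator tau g /\
  (
   (exists v u c w, g = (v, u, c :: w) /\ g' = (v, rcons u c, w ++ tau c)) \/
   (exists v u c w, g = (rcons v c, u, w) /\ g' = (tau c ++ v, c :: u, w))).

Inductive ext_star (tau : A -> seq A) : gen_triple -> gen_triple -> Prop :=
| ext_refl g : ext_star tau g g
| ext_trans g1 g2 g3 : ext_step tau g1 g2 -> ext_star tau g2 g3 -> ext_star tau g1 g3.

Definition G_related (tau : A -> seq A) (g1 g2 : gen_triple) : Prop :=
  generator tau g1 /\ generator tau g2 /\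
  exists g3, generator tau g3 /\ ext_star tau g1 g3 /\ ext_star tau g2 g3.

Definition basic (tau : A -> seq A) (g : gen_triple) : Prop :=
  generator tau g /\
  forall g', generator tau g' -> G_related tau g g' -> ~ (gen_len g' < gen_len g).

End Subst.

(* Main.v *)
From Stdlib Require Import Classical.
Require Import Defs.
From mathcomp Require Import all_boot.

Section Aux.
Local Set Implicit Arguments.
Local Unset Strict Implicit.
Variable A : finType.
Variable tau : A -> seq A.
Notation sw := (subst_word tau).
Notation trip := (gen_triple A).

Lemma catIl (s t1 t2 : seq A) : s ++ t1 = s ++ t2 -> t1 = t2.
Proof. by elim: s => //= x s IH [] /IH. Qed.

Lemma catIr (s t1 t2 : seq A) : t1 ++ s = t2 ++ s -> t1 = t2.
Proof.
move/(congr1 rev); rewrite !rev_cat => /catIl E.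
by rewrite -(revK t1) E revK.
Qed.

Lemma sw_cat u1 u2 : sw (u1 ++ u2) = sw u1 ++ sw u2.
Proof. by rewrite /subst_word map_cat flatten_cat. Qed.

Lemma sw_rcons u c : sw (rcons u c) = sw u ++ tau c.
Proof. by rewrite -cats1 sw_cat /subst_word /= cats0. Qed.

Definition pregen (g : trip) : Prop :=
  let: (v, u, w) := g in [/\ v <> [::], u <> [::], w <> [::] & sw u = v ++ u ++ w].

Definition rext (g g' : trip) :=
  exists v u c w, g = (v, u, c :: w) /\ g' = (v, rcons u c, w ++ tau c).
Definition lext (g g' : trip) :=
  exists v u c w, g = (rcons v c, u, w) /\ g' = (tau c ++ v, c :: u, w).
Definition ext g g' := pregen g /\ (rext g g' \/ lext g g').
Definition irred g := forall g', ~ ext g' g.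

Inductive rstar : trip -> trip -> Prop :=
| rs_refl g : rstar g g
| rs_step g1 g2 g3 : rstar g1 g2 -> ext g2 g3 -> rstar g1 g3.

Lemma ext_len g g' : ext g g' -> gen_len g' = (gen_len g).+1.
Proof.
case=> _ [[v [u [c [w [-> ->]]]]]|[v [u [c [w [-> ->]]]]]];
by rewrite /gen_len /gen_center /= ?size_rcons.
Qed.

Lemma rstar_len g h : rstar g h -> gen_len g <= gen_len h.
Proof.
elim=> // g1 g2 g3 _ IH /ext_len ->; exact: leq_trans IH (leqnSn _).
Qed.

Lemma rstar_trans a b c : rstar a b -> rstar b c -> rstar a c.
Proof. move=> H1 H2; elim: H2 H1 => // g1 g2 g3 _ IH E H1; exact: rs_step (IH H1) E. Qed.

Lemma rstar_inv g h : rstar g h -> g = h \/ exists g', rstar g g' /\ ext g' h.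
Proof. case=> [|g1 g2 g3 R E]; [by left | right; by exists g2]. Qed.

Lemma rext_inj g1 g2 h : rext g1 h -> rext g2 h -> g1 = g2.
Proof.
move=> [v1 [u1 [c1 [w1 [-> ->]]]]] [v2 [u2 [c2 [w2 [-> [-> /rcons_inj [-> ->]]]]]]].
by move=> E; rewrite (catIr E).
Qed.

Lemma lext_inj g1 g2 h : lext g1 h -> lext g2 h -> g1 = g2.
Proof.
move=> [v1 [u1 [c1 [w1 [-> ->]]]]] [v2 [u2 [c2 [w2 [-> [E Ec Eu Ew]]]]]].
by subst; rewrite (catIl E).
Qed.

Lemma rl_conf g1 g2 h : pregen g1 -> rext g1 h -> lext g2 h ->
  exists g3, ext g3 g1 /\ ext g3 g2.
Proof.
move=> Hp [v1 [u1 [c [w1 [E1 ->]]]]] [v2 [u2 [d [w2 [-> [Ev Eu Ew]]]]]].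
subst g1 v1 w2; case: Hp => _ + _.
case: u1 Eu => [//|d' m] /= [<- Eu] _.
case: m Eu => [|x m] Eu /=.
  rewrite /subst_word /= cats0 => /(congr1 size); rewrite !size_cat /=.
  move=> /eqP; rewrite -{1}[size (tau d')]addn0 -addnA eqn_add2l.
  by rewrite addnC.
rewrite {1}/subst_word /= -catA => /catIl Esw.
have Hp3 : pregen (rcons v2 d', x :: m, c :: w1).
  split=> //; first by case: v2 {Esw}.
  by rewrite cat_rcons.
exists (rcons v2 d', x :: m, c :: w1); split; split=> //.
  by right; exists v2, (x :: m), d', (c :: w1).
left; exists (rcons v2 d'), (x :: m), c, w1; split=> //.
by rewrite -Eu.
Qed.

Lemma two_preds g1 g2 h : ext g1 h -> ext g2 h ->
  g1 = g2 \/ exists g3, ext g3 g1 /\ ext g3 g2.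
Proof.
move=> [P1 [R1|L1]] [P2 [R2|L2]].
- by left; exact: rext_inj R1 R2.
- by right; exact: rl_conf P1 R1 L2.
- by right; have [g3 [? ?]] := rl_conf P2 R2 L1; exists g3.
- by left; exact: lext_inj L1 L2.
Qed.

Lemma rstar_pregen g h : rstar g h -> pregen h -> pregen g.
Proof. elim=> // g1 g2 g3 _ IH [Hp _] _; exact: IH. Qed.

Lemma nf_ex h : pregen h -> exists n, rstar n h /\ irred n.
Proof.
have [N] := ubnP (gen_len h); elim: N h => // N IH h /ltnSE Hle Hp.
case: (classic (exists g, ext g h)) => [[g E]|NE].
  have Hl := ext_len E.
  have Hg : gen_len g < N by rewrite -ltnS -Hl.
  have [n [R I]] := IH g Hg (proj1 E).
  by exists n; split=> //; exact: rs_step R E.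
exists h; split; first exact: rs_refl.
by move=> g E; apply: NE; exists g.
Qed.

Lemma nf_uniq h n1 n2 : rstar n1 h -> irred n1 -> rstar n2 h -> irred n2 -> n1 = n2.
Proof.
have [N] := ubnP (gen_len h); elim: N h n1 n2 => // N IH h n1 n2 /ltnSE Hle.
move=> /rstar_inv [->|[g1 [R1 E1]]] I1 /rstar_inv [->|[g2 [R2 E2]]] I2 //.
- by case: (I1 g2).
- by case: (I2 g1).
have L1 := ext_len E1; have L2 := ext_len E2.
have H1 : gen_len g1 < N by rewrite -ltnS -L1.
have H2 : gen_len g2 < N by rewrite -ltnS -L2.
case: (two_preds E1 E2) => [E|[g3 [E31 E32]]].
  by subst g2; exact: IH _ _ _ H1 R1 I1 R2 I2.
have [n3 [R3 I3]] := nf_ex (proj1 E31).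
have -> := IH g1 n1 n3 H1 R1 I1 (rs_step R3 E31) I3.
by have -> := IH g2 n2 n3 H2 R2 I2 (rs_step R3 E32) I3.
Qed.

Lemma in_lang_factor u u' : in_lang tau u -> factor u' u -> in_lang tau u'.
Proof.
move=> [a [n [Hn [x [y E]]]]] [p [q Eu]]; exists a, n; split=> //.
by exists (x ++ p), (q ++ y); rewrite E Eu !catA.
Qed.

Lemma gen_pregen g : generator tau g -> pregen g.
Proof. by case: g => [[v u] w] [? ? ? ? ?]. Qed.

Lemma pregen_gen g : pregen g -> in_lang tau (gen_center g) -> generator tau g.
Proof. by case: g => [[v u] w] [? ? ? ?] ?. Qed.

Lemma ext_factor g g' : ext g g' -> factor (gen_center g) (gen_center g').
Proof.
case=> _ [[v [u [c [w [-> ->]]]]]|[v [u [c [w [-> ->]]]]]].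
  by exists [::], [:: c]; rewrite /= cats1.
by exists [:: c], [::]; rewrite /= cats0.
Qed.

Lemma ext_gen g g' : ext g g' -> generator tau g' ->
  generator tau g /\ ext_step tau g g'.
Proof.
move=> E G'.
have G : generator tau g.
  apply: pregen_gen; first by case: E.
  apply: in_lang_factor (ext_factor E).
  by case: g' G' {E} => [[v u] w] [].
by split=> //; split=> //; case: E.
Qed.

Lemma ext_step_ext g g' : ext_step tau g g' -> ext g g'.
Proof. by case=> /gen_pregen. Qed.

Lemma ext_star_snoc g1 g2 g3 :
  ext_star tau g1 g2 -> ext_step tau g2 g3 -> ext_star tau g1 g3.
Proof.
elim=> [g S|a b c S _ IH S']; first exact: ext_trans S (ext_refl _ _).
exact: ext_trans S (IH S').
Qed.

Lemma rstar_ext_star g h : rstar g h -> generator tau h ->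
  ext_star tau g h /\ generator tau g.
Proof.
elim=> [g0 G|g1 g2 g3 _ IH E G3]; first by split=> //; exact: ext_refl.
have [G2 S] := ext_gen E G3.
have [S1 G1] := IH G2.
by split=> //; exact: ext_star_snoc S1 S.
Qed.

Lemma ext_star_rstar g h : ext_star tau g h -> rstar g h.
Proof.
elim=> [g0|g1 g2 g3 S _ IH]; first exact: rs_refl.
exact: rstar_trans (rs_step (rs_refl g1) (ext_step_ext S)) IH.
Qed.

Lemma irred_basic g : generator tau g -> irred g -> basic tau g.
Proof.
move=> G I; split=> // g' G' [_ [_ [h [Gh [S1 S2]]]]].
have [n' [R' I']] := nf_ex (gen_pregen G').
have E := nf_uniq (rstar_trans R' (ext_star_rstar S2)) I' (ext_star_rstar S1) I.
subst n'; move=> Hlt; have := rstar_len R'; by rewrite leqNgt Hlt.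
Qed.

Lemma basic_irred g : basic tau g -> irred g.
Proof.
move=> [G B] g' E.
have [G' S] := ext_gen E G.
apply: (B g' G'); last by rewrite (ext_len (ext_step_ext S)).
split=> //; split=> //; exists g; split=> //; split; first exact: ext_refl.
exact: ext_trans S (ext_refl _ _).
Qed.

End Aux.

Theorem mainTheorem4 (A : finType) (tau : A -> seq A) :
  0 < #|A| ->
  is_substitution tau ->
  (forall g1 g2 : gen_triple A,
      basic tau g1 -> basic tau g2 -> g1 <> g2 -> ~ G_related tau g1 g2) /\
  (forall g : gen_triple A, generator tau g ->
      exists g0 : gen_triple A,
        [/\ basic tau g0, G_related tau g g0 &
            forall g1 : gen_triple A, basic tau g1 -> G_related tau g g1 -> g1 = g0]).
Proof.
move=> _ _; split.
  move=> g1 g2 B1 B2 Hne [_ [_ [h [_ [S1 S2]]]]]; apply: Hne.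
  exact: nf_uniq (ext_star_rstar S1) (basic_irred B1)
                 (ext_star_rstar S2) (basic_irred B2).
move=> g G.
have [n [R I]] := nf_ex (gen_pregen G).
have [Sn Gn] := rstar_ext_star R G.
exists n; split; first exact: irred_basic.
  by split=> //; split=> //; exists g; split=> //; split=> //; exact: ext_refl.
move=> g1 B1 [_ [_ [h [_ [S1 S2]]]]].
exact: nf_uniq (ext_star_rstar S2) (basic_irred B1)
               (rstar_trans R (ext_star_rstar S1)) I.
Qed.
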